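(* Let $v_2$, $v_3$ and $\delta$ satisfy the standing assumptions described in the context. Then there exist numbers $\ell^*\le 1$ and $\theta^*<2\pi/3$, uniquely determined by the energy (i.e. by $v_2$ and $v_3$), such that every optimal cell $(y_1,\dots,y_6)$ satisfies $|y_i-y_{i-1}|=\ell^*$ and $\theta_i=\theta^*$ for all $i=1,\dots,6$.
   Context: A cell is a $6$-tuple $(y_1,\dots,y_6)\in(\mathbb{R}^3)^6$, indices modulo $6$. Its bonds are the segments $\{y_{i-1},y_i\}$ with lengths $|y_i-y_{i-1}|$, and $\theta_i\in[0,\pi]$ is the bond angle at $y_i$ between the segments $\{y_i,y_{i+1}\}$ and $\{y_i,y_{i-1}\}$. Cell energy: $$E_{\rm cell}(y_1,\dots,y_6)=\tfrac12\sum_{i=1}^6 v_2(|y_i-y_{i-1}|)+\sum_{i=1}^6 v_2(|y_i-y_{i-2}|)+\sum_{i=1}^6 v_3(\theta_i).$$ An optimal cell is a minimizer of $E_{\rm cell}$ on $(\mathbb{R}^3)^6$. Standing assumptions: $v_2:(0,\infty)\to[-1,\infty)$ is continuous, attains its minimum value $-1$ only at $1$, is decreasing on $(0,1)$ and increasing on $[1,\infty)$, and is differentiable on $(5/4,\sqrt3]$ with $v_2'>0$ there; $v_3:[0,\pi]\to[0,\infty)$ is continuous, attains its minimum value $0$ only at $2\pi/3$, and is differentiable at $2\pi/3$. Moreover there is $0<\delta\le 0.2$ with: (i) $v_2(1-\delta)>11+12v_2(\sqrt3)$; (ii) $v_2(1+\delta)>-1+12v_2(\sqrt3)-12v_2(\sqrt3(1-\delta)^2)$;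 (iii) $v_3(\theta)>6+6v_2(\sqrt3)$ whenever $|\theta-2\pi/3|\ge\delta$; (iv) the map $(\ell_1,\ell_2,\theta)\mapsto \frac14 v_2(\ell_1)+\frac14 v_2(\ell_2)+v_2\big((\ell_1^2+\ell_2^2-2\ell_1\ell_2\cos\theta)^{1/2}\big)+v_3(\theta)$ is strictly convex on $\{|\ell_1-1|<\delta,\ |\ell_2-1|<\delta,\ |\theta-2\pi/3|<\delta\}$. *)

(* Defs.v *)
From Stdlib Require Import Reals Lra.
Open Scope R_scope.

Record P3 := mkP3 { px : R; py : R; pz : R }.

Definition vsub (a b : P3) : P3 := mkP3 (px a - px b) (py a - py b) (pz a - pz b).
Definition dot (a b : P3) : R := px a * px b + py a * py b + pz a * pz b.
Definition norm3 (a : P3) : R := sqrt (dot a a).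
Definition dist3 (a b : P3) : R := norm3 (vsub a b).

(* A cell is a 6-tuple of points, represented as a function nat -> P3 whose
   values are only used through the index modulo 6: the paper's y_i
   (i = 1..6, indices mod 6) is [y (i mod 6)], with y_6 = y_0. *)
Definition cell := nat -> P3.
Definition pt (y : cell) (i : nat) : P3 := y (i mod 6).
Definition prv (i : nat) : nat := (i + 5)%nat.   (* i - 1 modulo 6 *)
Definition prv2 (i : nat) : nat := (i + 4)%nat.  (* i - 2 modulo 6 *)
Definition nxt (i : nat) : nat := (i + 1)%nat.

Definition bond (y : cell) (i : nat) : R := dist3 (pt y i) (pt y (prv i)).
Definition dist2nd (y : cell) (i : nat) : R := dist3 (pt y i) (pt y (prv2 i)).

Definition angle3 (a b : P3) : R := acos (dot a b / (norm3 a * norm3 b)).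

Definition bond_angle (y : cell) (i : nat) : R :=
  angle3 (vsub (pt y (nxt i)) (pt y i)) (vsub (pt y (prv i)) (pt y i)).

(* Cell energy; indices i = 0..5 represent the paper's i = 1..6. *)
Definition E_cell (v2 v3 : R -> R) (y : cell) : R :=
  (1/2) * (sum_f_R0 (fun i => v2 (bond y i)) 5)
  + sum_f_R0 (fun i => v2 (dist2nd y i)) 5
  + sum_f_R0 (fun i => v3 (bond_angle y i)) 5.

(* Since v2 is only defined on (0,oo), E_cell is defined exactly on cells
   all of whose bond lengths and second-neighbour distances are positive. *)
Definition admissible (y : cell) : Prop :=
  forall i : nat, 0 < bond y i /\ 0 < dist2nd y i.

Definition optimal_cell (v2 v3 : R -> R) (y : cell) : Prop :=
  admissible y /\ forall z : cell, admissible z -> E_cell v2 v3 y <= E_cell v2 v3 z.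

Definition strictly_convex3 (S : R -> R -> R -> Prop) (f : R -> R -> R -> R) : Prop :=
  forall a1 a2 a3 b1 b2 b3 t,
    S a1 a2 a3 -> S b1 b2 b3 -> (a1, a2, a3) <> (b1, b2, b3) -> 0 < t < 1 ->
    f (t * a1 + (1 - t) * b1) (t * a2 + (1 - t) * b2) (t * a3 + (1 - t) * b3)
    < t * f a1 a2 a3 + (1 - t) * f b1 b2 b3.

Definition standing_assumptions (v2 v3 : R -> R) (delta : R) : Prop :=
  (forall x, 0 < x -> continuity_pt v2 x) /\
  (forall x, 0 < x -> -1 <= v2 x) /\
  v2 1 = -1 /\
  (forall x, 0 < x -> x <> 1 -> -1 < v2 x) /\
  (forall x y, 0 < x -> x <= y -> y < 1 -> v2 y <= v2 x) /\
  (forall x y, 1 <= x -> x <= y -> v2 x <= v2 y) /\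
  (forall x, 5/4 < x <= sqrt 3 -> exists d, derivable_pt_lim v2 x d /\ 0 < d) /\
  (forall x, 0 <= x <= PI -> limit1_in v3 (fun t => 0 <= t <= PI) (v3 x) x) /\
  (forall x, 0 <= x <= PI -> 0 <= v3 x) /\
  v3 (2 * PI / 3) = 0 /\
  (forall x, 0 <= x <= PI -> x <> 2 * PI / 3 -> 0 < v3 x) /\
  (exists d, derivable_pt_lim v3 (2 * PI / 3) d) /\
  (* delta and conditions (i)-(iv) *)
  0 < delta <= 1/5 /\
  v2 (1 - delta) > 11 + 12 * v2 (sqrt 3) /\
  v2 (1 + delta) > -1 + 12 * v2 (sqrt 3) - 12 * v2 (sqrt 3 * (1 - delta) ^ 2) /\
  (forall th, 0 <= th <= PI -> Rabs (th - 2 * PI / 3) >= delta ->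
     v3 th > 6 + 6 * v2 (sqrt 3)) /\
  strictly_convex3
    (fun l1 l2 th => Rabs (l1 - 1) < delta /\ Rabs (l2 - 1) < delta /\
                     Rabs (th - 2 * PI / 3) < delta)
    (fun l1 l2 th => (1/4) * v2 l1 + (1/4) * v2 l2
        + v2 (sqrt (l1 ^ 2 + l2 ^ 2 - 2 * l1 * l2 * cos th)) + v3 th).

(* Main.v *)
Require Import Defs.
From Stdlib Require Import Reals Lra Lia Classical.
From Coquelicot Require Import Coquelicot.
Open Scope R_scope.

Lemma dot_self_nonneg a : 0 <= dot a a.
Proof. unfold dot. nra. Qed.

Lemma dist3_sym a b : dist3 a b = dist3 b a.
Proof. unfold dist3, norm3, vsub, dot; simpl. f_equal. ring. Qed.

Lemma dist3_nonneg a b : 0 <= dist3 a b.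
Proof. apply sqrt_pos. Qed.

Lemma norm3_sq a : norm3 a * norm3 a = dot a a.
Proof. unfold norm3. apply sqrt_sqrt, dot_self_nonneg. Qed.

Lemma CS u w : dot u w * dot u w <= dot u u * dot w w.
Proof.
  unfold dot. destruct u as [a b c], w as [d e f]; simpl.
  assert (H: (a*a+b*b+c*c)*(d*d+e*e+f*f) - (a*d+b*e+c*f)*(a*d+b*e+c*f)
    = (a*e-b*d)*(a*e-b*d) + (a*f-c*d)*(a*f-c*d) + (b*f-c*e)*(b*f-c*e)) by ring.
  pose proof (Rle_0_sqr (a*e-b*d)); pose proof (Rle_0_sqr (a*f-c*d)); pose proof (Rle_0_sqr (b*f-c*e)).
  unfold Rsqr in *. lra.
Qed.

Lemma angle_cos u w : 0 < norm3 u -> 0 < norm3 w ->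
  cos (angle3 u w) * (norm3 u * norm3 w) = dot u w /\ 0 <= angle3 u w <= PI.
Proof.
  intros Hu Hw. unfold angle3.
  pose proof (CS u w) as Hcs. rewrite <- !norm3_sq in Hcs.
  set (p := norm3 u * norm3 w) in *. assert (Hp : 0 < p) by (unfold p; nra).
  assert (Hb : - p <= dot u w <= p).
  { unfold p in *. split; nra. }
  split; [|apply acos_bound].
  rewrite cos_acos. field. lra.
  split.
  - apply (Rmult_le_reg_r p); [lra|]. unfold Rdiv. rewrite Rmult_assoc, Rinv_l; lra.
  - apply (Rmult_le_reg_r p); [lra|]. unfold Rdiv. rewrite Rmult_assoc, Rinv_l; lra.
Qed.

Lemma pt_prv_nxt y i : pt y (prv (nxt i)) = pt y i.
Proof.
  unfold pt, prv, nxt. replace (i + 1 + 5)%nat with (i + 1 * 6)%nat by lia.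
  rewrite Nat.Div0.mod_add. reflexivity.
Qed.

Lemma pt_prv2_nxt y i : pt y (prv2 (nxt i)) = pt y (prv i).
Proof. unfold pt, prv2, prv, nxt. replace (i + 1 + 4)%nat with (i + 5)%nat by lia. reflexivity. Qed.

Lemma law y i : 0 < bond y (nxt i) -> 0 < bond y i ->
  0 <= bond_angle y i <= PI /\
  cos (bond_angle y i) * (2 * bond y (nxt i) * bond y i)
   = bond y (nxt i) ^ 2 + bond y i ^ 2 - dist2nd y (nxt i) ^ 2.
Proof.
  intros H1 H2.
  assert (E1 : bond y (nxt i) = norm3 (vsub (pt y (nxt i)) (pt y i))).
  { unfold bond. rewrite pt_prv_nxt. reflexivity. }
  assert (E2 : bond y i = norm3 (vsub (pt y (prv i)) (pt y i))).
  { unfold bond. rewrite dist3_sym. reflexivity. }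
  assert (E3 : dist2nd y (nxt i) = dist3 (pt y (nxt i)) (pt y (prv i))).
  { unfold dist2nd. rewrite pt_prv2_nxt. reflexivity. }
  rewrite E1, E2 in *. rewrite E3. unfold bond_angle.
  destruct (angle_cos (vsub (pt y (nxt i)) (pt y i)) (vsub (pt y (prv i)) (pt y i)) H1 H2) as [Hc Hr].
  split; [exact Hr|].
  replace (cos _ * _) with (2 * (cos (angle3 (vsub (pt y (nxt i)) (pt y i)) (vsub (pt y (prv i)) (pt y i))) *
     (norm3 (vsub (pt y (nxt i)) (pt y i)) * norm3 (vsub (pt y (prv i)) (pt y i))))) by ring.
  rewrite Hc.
  assert (Sq : forall x, 0 <= x -> sqrt x ^ 2 = x) by (intros; simpl; rewrite Rmult_1_r; apply sqrt_sqrt; auto).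
  unfold dist3, norm3. rewrite !Sq by apply dot_self_nonneg.
  unfold vsub, dot; simpl. ring.
Qed.

Definition Fv (v2 v3 : R -> R) l1 l2 th :=
  (1/4) * v2 l1 + (1/4) * v2 l2 + v2 (sqrt (l1 ^ 2 + l2 ^ 2 - 2 * l1 * l2 * cos th)) + v3 th.

Lemma law2 y i : 0 < bond y (nxt i) -> 0 < bond y i ->
  0 <= bond_angle y i <= PI /\
  dist2nd y (nxt i) = sqrt (bond y (nxt i) ^ 2 + bond y i ^ 2 - 2 * bond y (nxt i) * bond y i * cos (bond_angle y i)).
Proof.
  intros H1 H2. destruct (law y i H1 H2) as [Hr Hc]. split; auto.
  replace (bond y (nxt i) ^ 2 + bond y i ^ 2 - 2 * bond y (nxt i) * bond y i * cos (bond_angle y i))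
    with (dist2nd y (nxt i) * dist2nd y (nxt i)) by nra.
  rewrite sqrt_square; auto. apply dist3_nonneg.
Qed.

Lemma E_decomp v2 v3 y : admissible y ->
  E_cell v2 v3 y =
    Fv v2 v3 (bond y 1) (bond y 0) (bond_angle y 0)
  + Fv v2 v3 (bond y 2) (bond y 1) (bond_angle y 1)
  + Fv v2 v3 (bond y 3) (bond y 2) (bond_angle y 2)
  + Fv v2 v3 (bond y 4) (bond y 3) (bond_angle y 3)
  + Fv v2 v3 (bond y 5) (bond y 4) (bond_angle y 4)
  + Fv v2 v3 (bond y 0) (bond y 5) (bond_angle y 5).
Proof.
  intros Ha.
  assert (D : forall k, dist2nd y (nxt k) = sqrt (bond y (nxt k) ^ 2 + bond y k ^ 2 - 2 * bond y (nxt k) * bond y k * cos (bond_angle y k))).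
  { intros k. apply law2; apply Ha. }
  pose proof (D 0%nat) as D0. pose proof (D 1%nat) as D1. pose proof (D 2%nat) as D2.
  pose proof (D 3%nat) as D3. pose proof (D 4%nat) as D4. pose proof (D 5%nat) as D5.
  cbn [nxt Nat.add] in D0, D1, D2, D3, D4, D5.
  change (bond y 6) with (bond y 0) in D5. change (dist2nd y 6) with (dist2nd y 0) in D5.
  unfold E_cell, Fv. cbn [sum_f_R0].
  rewrite D0, D1, D2, D3, D4, D5. lra.
Qed.

Lemma bond_mod y i : bond y i = bond y (i mod 6).
Proof.
  unfold bond, pt, prv. rewrite Nat.Div0.mod_mod, Nat.Div0.add_mod_idemp_l. reflexivity.
Qed.

Lemma dist2nd_mod y i : dist2nd y i = dist2nd y (i mod 6).
Proof.
  unfold dist2nd, pt, prv2. rewrite Nat.Div0.mod_mod, Nat.Div0.add_mod_idemp_l. reflexivity.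
Qed.

Lemma mod6_cases (P : nat -> Prop) : P 0%nat -> P 1%nat -> P 2%nat -> P 3%nat -> P 4%nat -> P 5%nat ->
  forall i, P (i mod 6)%nat.
Proof.
  intros. assert (H6 : (i mod 6 < 6)%nat) by (apply Nat.mod_upper_bound; lia).
  destruct (i mod 6)%nat as [|[|[|[|[|[|m]]]]]]; auto; lia.
Qed.

Definition chair (r h : R) : cell := fun k => match k with
 | 0%nat => mkP3 r 0 h | 1%nat => mkP3 (r/2) (r*sqrt 3/2) (-h)
 | 2%nat => mkP3 (-r/2) (r*sqrt 3/2) h
 | 3%nat => mkP3 (-r) 0 (-h) | 4%nat => mkP3 (-r/2) (-(r*sqrt 3/2)) h
 | _ => mkP3 (r/2) (-(r*sqrt 3/2)) (-h) end.

Lemma s3sq : sqrt 3 * sqrt 3 = 3.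
Proof. apply sqrt_sqrt; lra. Qed.

Lemma chair_bond r h i : bond (chair r h) i = sqrt (r ^ 2 + 4 * h ^ 2).
Proof.
  rewrite bond_mod. pose proof s3sq.
  apply (mod6_cases (fun k => bond (chair r h) k = sqrt (r ^ 2 + 4 * h ^ 2)));
  unfold bond, dist3, norm3, pt, prv, vsub, dot; simpl; f_equal; nra.
Qed.

Lemma chair_d2 r h i : dist2nd (chair r h) i = sqrt (3 * r ^ 2).
Proof.
  rewrite dist2nd_mod. pose proof s3sq.
  apply (mod6_cases (fun k => dist2nd (chair r h) k = sqrt (3 * r ^ 2)));
  unfold dist2nd, dist3, norm3, pt, prv2, vsub, dot; simpl; f_equal; nra.
Qed.

Lemma PI_gt3 : 3 < PI.
Proof. pose proof PI2_3_2. lra. Qed.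

Lemma cos_2PI3' : cos (2 * PI / 3) = -1/2.
Proof. replace (2 * PI / 3) with (2 * (PI / 3)) by field. apply cos_2PI3. Qed.

Lemma chair_energy v2 v3 l th : 0 < l -> 0 < th <= 2 * PI / 3 ->
  exists z, admissible z /\ E_cell v2 v3 z = 6 * Fv v2 v3 l l th.
Proof.
  intros Hl Hth. pose proof PI_gt3.
  assert (Hc1 : cos th < 1) by (rewrite <- cos_0; apply cos_decreasing_1; lra).
  assert (Hc2 : -1/2 <= cos th) by (rewrite <- cos_2PI3'; apply cos_decr_1; lra).
  set (r := l * sqrt ((2 - 2 * cos th) / 3)).
  assert (Hr2 : r ^ 2 = l ^ 2 * ((2 - 2 * cos th) / 3)).
  { unfold r. rewrite Rpow_mult_distr. f_equal. simpl. rewrite Rmult_1_r. apply sqrt_sqrt. lra. }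
  set (h := sqrt (l ^ 2 - r ^ 2) / 2).
  assert (Hh2 : 4 * h ^ 2 = l ^ 2 - r ^ 2).
  { unfold h. replace (4 * (sqrt (l ^ 2 - r ^ 2) / 2) ^ 2) with (sqrt (l ^ 2 - r ^ 2) * sqrt (l ^ 2 - r ^ 2)) by field.
    apply sqrt_sqrt. rewrite Hr2. nra. }
  assert (Hb : forall i, bond (chair r h) i = l).
  { intros i. rewrite chair_bond. replace (r ^ 2 + 4 * h ^ 2) with (l * l) by nra. apply sqrt_square. lra. }
  assert (Hd : forall i, dist2nd (chair r h) i = sqrt (l ^ 2 + l ^ 2 - 2 * l * l * cos th)).
  { intros i. rewrite chair_d2. f_equal. rewrite Hr2. field. }
  assert (Hdpos : 0 < sqrt (l ^ 2 + l ^ 2 - 2 * l * l * cos th)).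
  { apply sqrt_lt_R0. assert (0 < l*l) by nra. replace (l ^ 2 + l ^ 2 - 2 * l * l * cos th) with (2 * (l*l) * (1 - cos th)) by ring. apply Rmult_lt_0_compat; lra. }
  assert (Ha : admissible (chair r h)).
  { intros i. rewrite Hb, Hd. split; lra. }
  assert (Ht : forall i, bond_angle (chair r h) i = th).
  { intros i. destruct (law (chair r h) i) as [Hr Hc]; try (rewrite Hb; lra).
    rewrite !Hb, Hd in Hc. rewrite !pow2_sqrt in Hc by nra.
    apply cos_inj; try lra. apply (Rmult_eq_reg_r (2 * l * l)); [|nra]. rewrite Hc. ring. }
  exists (chair r h). split; auto.
  rewrite E_decomp by auto. rewrite !Hb, !Ht. ring.
Qed.

Fixpoint sm (g : nat -> R) (n : nat) : R := match n with 0%nat => 0 | S k => sm g k + g k end.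

Lemma sm_const g x n : (forall i, (i < n)%nat -> g i = x) -> sm g n = INR n * x.
Proof.
  induction n; intros H; cbn [sm]. simpl INR. ring.
  rewrite IHn by (intros; apply H; lia). rewrite H by lia. rewrite S_INR. ring.
Qed.

Lemma wconv S F : strictly_convex3 S F -> forall a1 a2 a3 b1 b2 b3 t,
  S a1 a2 a3 -> S b1 b2 b3 -> 0 < t < 1 ->
  F (t * a1 + (1 - t) * b1) (t * a2 + (1 - t) * b2) (t * a3 + (1 - t) * b3)
    <= t * F a1 a2 a3 + (1 - t) * F b1 b2 b3.
Proof.
  intros HF a1 a2 a3 b1 b2 b3 t Ha Hb Ht.
  destruct (classic ((a1, a2, a3) = (b1, b2, b3))) as [E|N].
  - inversion E; subst.
    replace (t * b1 + (1 - t) * b1) with b1 by ring.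
    replace (t * b2 + (1 - t) * b2) with b2 by ring.
    replace (t * b3 + (1 - t) * b3) with b3 by ring. lra.
  - apply Rlt_le, HF; auto.
Qed.

Definition convex3 (S : R -> R -> R -> Prop) := forall a1 a2 a3 b1 b2 b3 t,
  S a1 a2 a3 -> S b1 b2 b3 -> 0 < t < 1 ->
  S (t * a1 + (1 - t) * b1) (t * a2 + (1 - t) * b2) (t * a3 + (1 - t) * b3).

Lemma jensen Sx F (HS : convex3 Sx) (HF : strictly_convex3 Sx F) (a b c : nat -> R) :
  forall n, (0 < n)%nat -> (forall i, (i < n)%nat -> Sx (a i) (b i) (c i)) ->
  Sx (sm a n / INR n) (sm b n / INR n) (sm c n / INR n) /\
  INR n * F (sm a n / INR n) (sm b n / INR n) (sm c n / INR n)
    <= sm (fun i => F (a i) (b i) (c i)) n /\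
  ((exists i, (i < n)%nat /\ (a i, b i, c i) <> (a 0%nat, b 0%nat, c 0%nat)) ->
   INR n * F (sm a n / INR n) (sm b n / INR n) (sm c n / INR n)
    < sm (fun i => F (a i) (b i) (c i)) n).
Proof.
  induction n as [|m IH]; intros Hn Hs. lia.
  destruct (Nat.eq_dec m 0) as [->|Hm].
  - simpl sm. replace (INR 1) with 1 by reflexivity.
    replace ((0 + a 0%nat) / 1) with (a 0%nat) by field.
    replace ((0 + b 0%nat) / 1) with (b 0%nat) by field.
    replace ((0 + c 0%nat) / 1) with (c 0%nat) by field.
    split; [apply Hs; lia|]. split; [lra|].
    intros [i [Hi Hne]]. replace i with 0%nat in Hne by lia. congruence.
  - destruct IH as [IHS [IHw IHs]]; [lia| intros; apply Hs; lia |].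
    assert (Hmpos : 0 < INR m) by (apply lt_0_INR; lia).
    set (t := INR m / INR (S m)).
    assert (HSm : INR (S m) = INR m + 1) by apply S_INR.
    assert (Ht : 0 < t < 1).
    { unfold t; rewrite HSm; split.
      - apply Rdiv_lt_0_compat; lra.
      - apply (Rmult_lt_reg_r (INR m + 1)); [lra|]. field_simplify; lra. }
    assert (Hmean : forall g, sm g (S m) / INR (S m) = t * (sm g m / INR m) + (1 - t) * g m).
    { intros g. simpl sm. unfold t. rewrite HSm. field. lra. }
    rewrite !Hmean.
    assert (Sm : Sx (a m) (b m) (c m)) by (apply Hs; lia).
    split; [apply HS; auto|].
    pose proof (wconv Sx F HF _ _ _ _ _ _ t IHS Sm Ht) as Hw.
    assert (Hk : INR (S m) * t = INR m) by (unfold t; field; lra).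
    assert (Hk2 : INR (S m) * (1 - t) = 1) by (unfold t; rewrite HSm; field; lra).
    assert (Hsum : sm (fun i => F (a i) (b i) (c i)) (S m) = sm (fun i => F (a i) (b i) (c i)) m + F (a m) (b m) (c m)) by reflexivity.
    rewrite Hsum.
    split.
    + apply Rle_trans with (INR (S m) * (t * F (sm a m / INR m) (sm b m / INR m) (sm c m / INR m)
           + (1 - t) * F (a m) (b m) (c m))).
      * apply Rmult_le_compat_l; [lra|exact Hw].
      * rewrite Rmult_plus_distr_l, <- !Rmult_assoc, Hk, Hk2. lra.
    + intros Hex.
      destruct (classic (exists i, (i < m)%nat /\ (a i, b i, c i) <> (a 0%nat, b 0%nat, c 0%nat))) as [Hin|Hnin].
      * specialize (IHs Hin).
        apply Rle_lt_trans with (INR (S m) * (t * F (sm a m / INR m) (sm b m / INR m) (sm c m / INR m)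
           + (1 - t) * F (a m) (b m) (c m))).
        -- apply Rmult_le_compat_l; [lra|exact Hw].
        -- rewrite Rmult_plus_distr_l, <- !Rmult_assoc, Hk, Hk2. lra.
      * assert (Hall : forall i, (i < m)%nat -> (a i, b i, c i) = (a 0%nat, b 0%nat, c 0%nat)).
        { intros i Hi. apply NNPP. intro N. apply Hnin. exists i. auto. }
        assert (Ea : sm a m / INR m = a 0%nat).
        { rewrite (sm_const a (a 0%nat)). field; lra. intros i Hi. specialize (Hall i Hi). congruence. }
        assert (Eb : sm b m / INR m = b 0%nat).
        { rewrite (sm_const b (b 0%nat)). field; lra. intros i Hi. specialize (Hall i Hi). congruence. }
        assert (Ec : sm c m / INR m = c 0%nat).
        { rewrite (sm_const c (c 0%nat)). field; lra. intros i Hi. specialize (Hall i Hi). congruence. }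
        assert (Hne : (a m, b m, c m) <> (a 0%nat, b 0%nat, c 0%nat)).
        { destruct Hex as [i [Hi Hne]]. destruct (Nat.eq_dec i m) as [->|Him]; auto.
          exfalso. apply Hne, Hall. lia. }
        rewrite Ea, Eb, Ec in *.
        assert (Hst : F (t * a 0%nat + (1 - t) * a m) (t * b 0%nat + (1 - t) * b m) (t * c 0%nat + (1 - t) * c m)
           < t * F (a 0%nat) (b 0%nat) (c 0%nat) + (1 - t) * F (a m) (b m) (c m)).
        { apply HF; auto; try (intro E; apply Hne; symmetry; exact E). }
        apply Rlt_le_trans with (INR (S m) * (t * F (a 0%nat) (b 0%nat) (c 0%nat) + (1 - t) * F (a m) (b m) (c m))).
        -- apply Rmult_lt_compat_l; [lra|exact Hst].
        -- rewrite Rmult_plus_distr_l, <- !Rmult_assoc, Hk, Hk2. lra.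
Qed.

Lemma small_trig a : 0 <= a <= 1 -> 1 - a^2/2 <= cos a /\ sin a <= a.
Proof.
intros Ha. assert (PI/2 > 1.5) by (pose proof PI2_3_2; lra).
pose proof (cos_bound a 0 ltac:(lra) ltac:(lra)) as [H1 _].
pose proof (sin_bound a 0 ltac:(lra) ltac:(lra)) as [_ H2].
unfold cos_approx, sin_approx, cos_term, sin_term in *. simpl in *. split; [lra|].
assert (0 <= a*a) by nra. assert (a*a <= 1) by nra. assert (0<= a*a*a) by nra. nra. Qed.

Lemma s3_bounds : 1.7 < sqrt 3 < 1.75.
Proof.
  pose proof s3sq. pose proof Rlt_sqrt3_0. split; nra.
Qed.

Lemma dec_pos f x D : derivable_pt_lim f x D -> 0 < D -> forall eta, 0 < eta ->
  exists h, - eta < h < 0 /\ f (x + h) < f x.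
Proof.
  intros Hd HD eta Heta. destruct (Hd (D/2) ltac:(lra)) as [del Hdel].
  pose proof (cond_pos del) as Hdp.
  set (h := - (Rmin del eta) / 2).
  assert (Hm1 : Rmin del eta <= del) by apply Rmin_l.
  assert (Hm2 : Rmin del eta <= eta) by apply Rmin_r.
  assert (Hm0 : 0 < Rmin del eta) by (apply Rmin_pos; lra).
  exists h. assert (Hh : - eta < h < 0) by (unfold h; lra). split; auto.
  specialize (Hdel h ltac:(lra)).
  assert (Ha : Rabs h < del) by (rewrite Rabs_left; unfold h in *; lra).
  specialize (Hdel Ha). apply Rabs_def2 in Hdel.
  set (q := (f (x + h) - f x) / h) in *.
  assert (Hq : f (x + h) - f x = q * h) by (unfold q; field; lra).
  nra.
Qed.

Lemma dec_neg f x D : derivable_pt_lim f x D -> D < 0 -> forall eta, 0 < eta ->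
  exists h, 0 < h < eta /\ f (x + h) < f x.
Proof.
  intros Hd HD eta Heta. destruct (Hd (- D/2) ltac:(lra)) as [del Hdel].
  pose proof (cond_pos del) as Hdp.
  set (h := (Rmin del eta) / 2).
  assert (Hm1 : Rmin del eta <= del) by apply Rmin_l.
  assert (Hm2 : Rmin del eta <= eta) by apply Rmin_r.
  assert (Hm0 : 0 < Rmin del eta) by (apply Rmin_pos; lra).
  exists h. assert (Hh : 0 < h < eta) by (unfold h; lra). split; auto.
  specialize (Hdel h ltac:(lra)).
  assert (Ha : Rabs h < del) by (rewrite Rabs_right; unfold h in *; lra).
  specialize (Hdel Ha). apply Rabs_def2 in Hdel.
  set (q := (f (x + h) - f x) / h) in *.
  assert (Hq : f (x + h) - f x = q * h) by (unfold q; field; lra).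
  nra.
Qed.

Ltac unpack H :=
  destruct H as [Hcont [Hge [H1 [Hgt [Hdec [Hinc [Hder [Hc3 [H3ge [H30 [H3gt [Hd3 [Hdel [Hi [Hii [Hiii Hiv]]]]]]]]]]]]]]]].

Lemma v3_deriv0 v2 v3 delta : standing_assumptions v2 v3 delta ->
  derivable_pt_lim v3 (2 * PI / 3) 0.
Proof.
  intros H. unpack H. destruct Hd3 as [d Hd]. pose proof PI_gt3. pose proof PI_4.
  destruct (Rtotal_order d 0) as [Hn|[Hz|Hp]].
  - destruct (dec_neg _ _ _ Hd Hn 1 ltac:(lra)) as [h [Hh Hlt]].
    rewrite H30 in Hlt. pose proof (H3ge (2 * PI / 3 + h) ltac:(lra)). lra.
  - subst; auto.
  - destruct (dec_pos _ _ _ Hd Hp 1 ltac:(lra)) as [h [Hh Hlt]].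
    rewrite H30 in Hlt. pose proof (H3ge (2 * PI / 3 + h) ltac:(lra)). lra.
Qed.

Lemma Fmono v2 v3 delta l th : standing_assumptions v2 v3 delta ->
  1 - delta < l -> 2 * PI / 3 <= th <= PI ->
  Fv v2 v3 l l (2 * PI / 3) <= Fv v2 v3 l l th /\
  (th <> 2 * PI / 3 -> Fv v2 v3 l l (2 * PI / 3) < Fv v2 v3 l l th).
Proof.
  intros H Hl Hth. unpack H. pose proof PI_gt3.
  assert (Hc : cos th <= -1/2) by (rewrite <- cos_2PI3'; apply cos_decr_1; lra).
  unfold Fv. rewrite cos_2PI3'.
  assert (HA : 1 <= sqrt (l ^ 2 + l ^ 2 - 2 * l * l * (-1/2))).
  { rewrite <- sqrt_1. apply sqrt_le_1_alt. nra. }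
  assert (HB : sqrt (l ^ 2 + l ^ 2 - 2 * l * l * (-1/2)) <= sqrt (l ^ 2 + l ^ 2 - 2 * l * l * cos th)).
  { apply sqrt_le_1_alt. assert (0 < l * l) by nra. nra. }
  pose proof (Hinc _ _ HA HB).
  rewrite H30. split.
  - pose proof (H3ge th ltac:(lra)). lra.
  - intros Hne. pose proof (H3gt th ltac:(lra) Hne). lra.
Qed.

Lemma d2_lower delta a b th : 0 < delta <= 1/5 -> 1 - delta < a -> 1 - delta < b ->
  Rabs (th - 2 * PI / 3) < delta -> 0 <= th <= PI ->
  sqrt 3 * (1 - delta) ^ 2 <= sqrt (a ^ 2 + b ^ 2 - 2 * a * b * cos th).
Proof.
  intros Hd Ha Hb Ht Hth. apply Rabs_def2 in Ht. pose proof PI_gt3.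
  assert (Hc : cos th <= cos (2 * PI / 3 - delta)) by (apply cos_decr_1; lra).
  rewrite cos_minus, cos_2PI3' in Hc.
  replace (2 * PI / 3) with (2 * (PI / 3)) in Hc by field. rewrite sin_2PI3 in Hc.
  destruct (small_trig delta ltac:(lra)) as [Hcd Hsd].
  pose proof s3_bounds.
  set (m := 1 - delta) in *.
  set (k0 := 1/2 - delta^2/4 - sqrt 3 * delta / 2).
  assert (Hc2 : cos th <= - k0) by (unfold k0; nra).
  assert (Hk0 : 0 <= k0) by (unfold k0; nra).
  assert (Hm : 0 < m) by (unfold m; lra).
  assert (Hab : m * m <= a * b) by (assert (0 <= (a - m) * (b - m)) by nra; assert (0 <= m * (a - m)) by nra; assert (0 <= m * (b - m)) by nra; nra).
  assert (Hcab : 2 * (a * b) * k0 <= - 2 * a * b * cos th) by nra.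
  assert (H2k : 3 * (m * m) <= 2 + 2 * k0) by (unfold k0, m; nra).
  assert (HX : 3 * (m ^ 2) ^ 2 <= a ^ 2 + b ^ 2 - 2 * a * b * cos th).
  { assert (m * m <= a * a) by nra. assert (m * m <= b * b) by nra.
    assert (2 * (m*m) * k0 <= 2 * (a * b) * k0) by nra.
    assert ((m*m) * (3 * (m*m)) <= (m*m) * (2 + 2 * k0)) by nra.
    simpl. nra. }
  apply Rle_trans with (sqrt (3 * (m ^ 2) ^ 2)).
  - rewrite sqrt_mult by (try lra; repeat apply pow_le; lra).
    rewrite sqrt_pow2 by (apply pow_le; lra). lra.
  - apply sqrt_le_1_alt. exact HX.
Qed.

Lemma phi_dec v2 v3 delta l : standing_assumptions v2 v3 delta ->
  1 - delta < l <= 1 ->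
  exists t, 2 * PI / 3 - 1 < t < 2 * PI / 3 /\ Fv v2 v3 l l t < Fv v2 v3 l l (2 * PI / 3).
Proof.
  intros H Hl. pose proof (v3_deriv0 _ _ _ H) as Hv3. unpack H.
  pose proof PI_gt3. pose proof PI_4. pose proof s3_bounds.
  set (t0 := 2 * PI / 3).
  set (g := fun t => l ^ 2 + l ^ 2 - 2 * l * l * cos t).
  assert (Hg : derivable_pt_lim g t0 (2 * l * l * sin t0)).
  { apply is_derive_Reals. unfold g. auto_derive; auto. lra. }
  assert (Hg0 : g t0 = 3 * l ^ 2). { unfold g, t0; cbv beta; rewrite cos_2PI3'. lra. }
  assert (Hgp : 0 < g t0) by (rewrite Hg0; nra).
  pose proof (derivable_pt_lim_sqrt _ Hgp) as Hs.
  set (x0 := sqrt (g t0)).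
  assert (Hx0 : x0 * x0 = 3 * l ^ 2) by (unfold x0; rewrite sqrt_sqrt; lra).
  assert (Hx0p : 0 < x0) by (unfold x0; apply sqrt_lt_R0; lra).
  assert (Hx0r : 5/4 < x0 <= sqrt 3).
  { pose proof s3sq. split; nra. }
  destruct (Hder x0 Hx0r) as [d2 [Hd2 Hd2p]].
  pose proof (derivable_pt_lim_comp _ _ _ _ _ Hg Hs) as Hsg.
  pose proof (derivable_pt_lim_comp _ _ _ _ _ Hsg Hd2) as Hvsg.
  pose proof (derivable_pt_lim_plus _ _ _ _ _ (derivable_pt_lim_const (1/4 * v2 l + 1/4 * v2 l) t0) Hvsg) as Hp1.
  pose proof (derivable_pt_lim_plus _ _ _ _ _ Hp1 Hv3) as Hp2.
  assert (Hsin : 0 < sin t0) by (apply sin_gt_0; unfold t0; lra).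
  assert (HD : 0 < 0 + d2 * (/ (2 * sqrt (g t0)) * (2 * l * l * sin t0)) + 0).
  { fold x0. assert (0 < / (2 * x0)) by (apply Rinv_0_lt_compat; lra).
    assert (0 < 2 * l * l * sin t0) by (assert (0 < l*l) by nra; nra).
    assert (0 < / (2 * x0) * (2 * l * l * sin t0)) by nra. nra. }
  destruct (dec_pos _ _ _ Hp2 HD 1 ltac:(lra)) as [h [Hh Hlt]].
  exists (t0 + h). split; [unfold t0 in *; lra|].
  unfold plus_fct, comp, fct_cte, g in Hlt. unfold Fv. fold t0. lra.
Qed.

Definition box (delta : R) := fun l1 l2 th => Rabs (l1 - 1) < delta /\ Rabs (l2 - 1) < delta /\
                     Rabs (th - 2 * PI / 3) < delta.

Lemma box_convex delta : convex3 (box delta).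
Proof.
  intros a1 a2 a3 b1 b2 b3 t [A1 [A2 A3]] [B1 [B2 B3]] Ht.
  apply Rabs_def2 in A1, A2, A3, B1, B2, B3.
  repeat split; apply Rabs_def1; nra.
Qed.

Lemma E_expand v2 v3 y : E_cell v2 v3 y =
  (1/2) * (v2 (bond y 0) + v2 (bond y 1) + v2 (bond y 2) + v2 (bond y 3) + v2 (bond y 4) + v2 (bond y 5))
  + (v2 (dist2nd y 0) + v2 (dist2nd y 1) + v2 (dist2nd y 2) + v2 (dist2nd y 3) + v2 (dist2nd y 4) + v2 (dist2nd y 5))
  + (v3 (bond_angle y 0) + v3 (bond_angle y 1) + v3 (bond_angle y 2) + v3 (bond_angle y 3) + v3 (bond_angle y 4) + v3 (bond_angle y 5)).
Proof. unfold E_cell. cbn [sum_f_R0]. lra. Qed.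

Lemma lt6_cases (P : nat -> Prop) : P 0%nat -> P 1%nat -> P 2%nat -> P 3%nat -> P 4%nat -> P 5%nat ->
  forall i, (i < 6)%nat -> P i.
Proof. intros. destruct i as [|[|[|[|[|[|m]]]]]]; auto; lia. Qed.

Lemma Ereg v2 v3 delta : standing_assumptions v2 v3 delta ->
  exists z, admissible z /\ E_cell v2 v3 z = -3 + 6 * v2 (sqrt 3).
Proof.
  intros H. pose proof PI_gt3. destruct (chair_energy v2 v3 1 (2 * PI / 3)) as [z [Hz Ez]]; try lra.
  exists z. split; auto. rewrite Ez. unfold Fv. rewrite cos_2PI3'.
  replace (1 ^ 2 + 1 ^ 2 - 2 * 1 * 1 * (-1 / 2)) with 3 by lra.
  unpack H. rewrite H1, H30. lra.
Qed.

Lemma apriori v2 v3 delta y : standing_assumptions v2 v3 delta -> optimal_cell v2 v3 y ->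
  forall i, (i < 6)%nat -> 1 - delta < bond y i < 1 + delta /\ Rabs (bond_angle y i - 2 * PI / 3) < delta.
Proof.
  intros H [Ha Hopt].
  destruct (Ereg _ _ _ H) as [z [Hz Ez]]. pose proof (Hopt z Hz) as Hle. rewrite Ez in Hle.
  rewrite E_expand in Hle.
  pose proof H as H'. unpack H'.
  assert (HL : forall k, -1 <= v2 (bond y k)) by (intros k; apply Hge, Ha).
  assert (HD : forall k, -1 <= v2 (dist2nd y k)) by (intros k; apply Hge, Ha).
  assert (HT : forall k, 0 <= bond_angle y k <= PI) by (intros k; apply law2; apply Ha).
  assert (HV : forall k, 0 <= v3 (bond_angle y k)) by (intros k; apply H3ge, HT).
  pose proof (HL 0%nat); pose proof (HL 1%nat); pose proof (HL 2%nat); pose proof (HL 3%nat); pose proof (HL 4%nat); pose proof (HL 5%nat).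
  pose proof (HD 0%nat); pose proof (HD 1%nat); pose proof (HD 2%nat); pose proof (HD 3%nat); pose proof (HD 4%nat); pose proof (HD 5%nat).
  pose proof (HV 0%nat); pose proof (HV 1%nat); pose proof (HV 2%nat); pose proof (HV 3%nat); pose proof (HV 4%nat); pose proof (HV 5%nat).
  assert (HA : forall i, (i < 6)%nat -> Rabs (bond_angle y i - 2 * PI / 3) < delta).
  { intros j Hj. destruct (Rlt_or_le (Rabs (bond_angle y j - 2 * PI / 3)) delta) as [|Hb]; auto.
    exfalso. pose proof (Hiii _ (HT j) (Rle_ge _ _ Hb)) as Hbad. clear Hb.
    revert j Hj Hbad. apply (lt6_cases (fun i => v3 (bond_angle y i) > 6 + 6 * v2 (sqrt 3) -> False)); intros; lra. }
  assert (HLo : forall i, (i < 6)%nat -> 1 - delta < bond y i).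
  { intros j Hj. destruct (Rlt_or_le (1 - delta) (bond y j)) as [|Hb]; auto.
    exfalso. assert (Hbad : v2 (1 - delta) <= v2 (bond y j)) by (apply Hdec; try lra; apply Ha).
    clear Hb. revert j Hj Hbad. apply (lt6_cases (fun i => v2 (1 - delta) <= v2 (bond y i) -> False)); intros; lra. }
  assert (Hs1 : 1 <= sqrt 3 * (1 - delta) ^ 2) by (pose proof s3_bounds; nra).
  assert (HDlo : forall k, (k < 6)%nat -> v2 (sqrt 3 * (1 - delta) ^ 2) <= v2 (dist2nd y (nxt k))).
  { intros k Hk. apply Hinc; auto.
    destruct (law2 y k) as [_ Hd]; try apply Ha. rewrite Hd.
    apply d2_lower; [auto | rewrite bond_mod; apply HLo, Nat.mod_upper_bound; lia | apply HLo; auto | apply HA; auto | apply HT]. }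
  pose proof (HDlo 0%nat ltac:(lia)) as D0. pose proof (HDlo 1%nat ltac:(lia)) as D1.
  pose proof (HDlo 2%nat ltac:(lia)) as D2. pose proof (HDlo 3%nat ltac:(lia)) as D3.
  pose proof (HDlo 4%nat ltac:(lia)) as D4. pose proof (HDlo 5%nat ltac:(lia)) as D5.
  cbn [nxt Nat.add] in D0, D1, D2, D3, D4, D5.
  change (dist2nd y 6) with (dist2nd y 0) in D5.
  assert (HUp : forall i, (i < 6)%nat -> bond y i < 1 + delta).
  { intros j Hj. destruct (Rlt_or_le (bond y j) (1 + delta)) as [|Hb]; auto.
    exfalso. assert (Hbad : v2 (1 + delta) <= v2 (bond y j)) by (apply Hinc; lra).
    clear Hb. revert j Hj Hbad.
    apply (lt6_cases (fun i => v2 (1 + delta) <= v2 (bond y i) -> False)); intros; lra. }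
  intros i Hi'. split; [split|]; auto.
Qed.

Lemma opt_struct v2 v3 delta y : standing_assumptions v2 v3 delta -> optimal_cell v2 v3 y ->
  exists l th, 1 - delta < l <= 1 /\ 2 * PI / 3 - delta < th < 2 * PI / 3 /\
    (forall i, (i < 6)%nat -> bond y i = l /\ bond_angle y i = th) /\
    E_cell v2 v3 y = 6 * Fv v2 v3 l l th.
Proof.
  intros H Hopt. pose proof (apriori _ _ _ _ H Hopt) as AP.
  destruct Hopt as [Ha Hmin].
  pose proof PI_gt3 as Hpi. pose proof PI_4 as Hpi4.
  pose proof H as H'. unpack H'.
  assert (HF : strictly_convex3 (box delta) (Fv v2 v3)) by exact Hiv.
  assert (APall : forall i, 1 - delta < bond y i < 1 + delta).
  { intros i. rewrite bond_mod. apply AP, Nat.mod_upper_bound. lia. }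
  assert (Hbox : forall i, (i < 6)%nat -> box delta (bond y (nxt i)) (bond y i) (bond_angle y i)).
  { intros i Hj. pose proof (APall (nxt i)). pose proof (APall i). destruct (AP i Hj) as [_ Ht].
    repeat split; auto; apply Rabs_def1; lra. }
  destruct (jensen (box delta) (Fv v2 v3) (box_convex delta) HF
     (fun i => bond y (nxt i)) (fun i => bond y i) (fun i => bond_angle y i) 6 ltac:(lia) Hbox)
    as [JS [Jw Js]].
  assert (Esum : sm (fun i => Fv v2 v3 (bond y (nxt i)) (bond y i) (bond_angle y i)) 6 = E_cell v2 v3 y).
  { rewrite E_decomp by auto. cbn [sm nxt Nat.add]. change (bond y 6) with (bond y 0). lra. }
  assert (Eab : sm (fun i => bond y (nxt i)) 6 = sm (fun i => bond y i) 6).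
  { cbn [sm nxt Nat.add]. change (bond y 6) with (bond y 0). lra. }
  rewrite Esum in Jw, Js. rewrite Eab in JS, Jw, Js.
  set (lb := sm (fun i => bond y i) 6 / INR 6) in *.
  set (tb := sm (fun i => bond_angle y i) 6 / INR 6) in *.
  destruct JS as [JS1 [_ JS3]]. apply Rabs_def2 in JS1, JS3.
  set (tc := Rmin tb (2 * PI / 3)).
  assert (Htc : Fv v2 v3 lb lb tc <= Fv v2 v3 lb lb tb).
  { unfold tc. destruct (Rle_or_lt tb (2 * PI / 3)) as [Hle|Hlt].
    - rewrite Rmin_left by auto. lra.
    - rewrite Rmin_right by lra. apply (Fmono _ _ _ _ _ H); lra. }
  assert (Htc0 : 0 < tc <= 2 * PI / 3).
  { unfold tc. split; [apply Rmin_glb_lt; lra | apply Rmin_r]. }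
  destruct (chair_energy v2 v3 lb tc ltac:(lra) Htc0) as [z1 [Hz1 Ez1]].
  pose proof (Hmin z1 Hz1) as Hm1. rewrite Ez1 in Hm1.
  replace (INR 6) with 6 in Jw, Js by (simpl; lra).
  assert (Hall : forall i, (i < 6)%nat ->
     (bond y (nxt i), bond y i, bond_angle y i) = (bond y (nxt 0), bond y 0%nat, bond_angle y 0%nat)).
  { intros i Hj. apply NNPP. intro N. assert (Hex : exists i, (i < 6)%nat /\
       (bond y (nxt i), bond y i, bond_angle y i) <> (bond y (nxt 0), bond y 0%nat, bond_angle y 0%nat)) by eauto.
    specialize (Js Hex). lra. }
  assert (HB : forall i, (i < 6)%nat -> bond y i = bond y 0%nat /\ bond_angle y i = bond_angle y 0%nat).
  { intros i Hj. pose proof (Hall i Hj) as E. inversion E. auto. }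
  assert (HB1 : bond y 1%nat = bond y 0%nat) by (apply HB; lia).
  assert (HB2 : bond y 2%nat = bond y 0%nat) by (apply HB; lia).
  assert (HB3 : bond y 3%nat = bond y 0%nat) by (apply HB; lia).
  assert (HB4 : bond y 4%nat = bond y 0%nat) by (apply HB; lia).
  assert (HB5 : bond y 5%nat = bond y 0%nat) by (apply HB; lia).
  assert (HT1 : bond_angle y 1%nat = bond_angle y 0%nat) by (apply HB; lia).
  assert (HT2 : bond_angle y 2%nat = bond_angle y 0%nat) by (apply HB; lia).
  assert (HT3 : bond_angle y 3%nat = bond_angle y 0%nat) by (apply HB; lia).
  assert (HT4 : bond_angle y 4%nat = bond_angle y 0%nat) by (apply HB; lia).
  assert (HT5 : bond_angle y 5%nat = bond_angle y 0%nat) by (apply HB; lia).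
  set (l := bond y 0%nat) in *. set (th := bond_angle y 0%nat) in *.
  assert (Ey : E_cell v2 v3 y = 6 * Fv v2 v3 l l th).
  { rewrite E_decomp by auto. rewrite HB1, HB2, HB3, HB4, HB5, HT1, HT2, HT3, HT4, HT5. fold l th. lra. }
  destruct (AP 0%nat ltac:(lia)) as [[Hl1 Hl2] Hth]. fold l th in Hl1, Hl2, Hth. apply Rabs_def2 in Hth.
  assert (Hthr : 0 <= th <= PI) by (apply law2; apply Ha).
  assert (Hth1 : th <= 2 * PI / 3).
  { destruct (Rle_or_lt th (2 * PI / 3)) as [|Hlt]; auto. exfalso.
    destruct (Fmono _ _ _ l th H) as [_ Hs]; try lra.
    specialize (Hs ltac:(lra)).
    destruct (chair_energy v2 v3 l (2 * PI / 3) ltac:(lra) ltac:(lra)) as [z [Hz Ez]].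
    pose proof (Hmin z Hz). lra. }
  assert (Hl3 : l <= 1).
  { destruct (Rle_or_lt l 1) as [|Hlt]; auto. exfalso.
    destruct (chair_energy v2 v3 1 th ltac:(lra) ltac:(lra)) as [z [Hz Ez]].
    pose proof (Hmin z Hz) as Hm.
    assert (Hc : cos th <= 1/2) by (rewrite <- cos_PI3; apply cos_decr_1; lra).
    assert (HA : 1 <= sqrt (1 ^ 2 + 1 ^ 2 - 2 * 1 * 1 * cos th)).
    { apply Rle_trans with (sqrt 1); [rewrite sqrt_1; lra | apply sqrt_le_1_alt; simpl; lra]. }
    assert (HBq : sqrt (1 ^ 2 + 1 ^ 2 - 2 * 1 * 1 * cos th) <= sqrt (l ^ 2 + l ^ 2 - 2 * l * l * cos th)).
    { apply sqrt_le_1_alt. assert (1 < l * l) by nra. nra. }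
    pose proof (Hinc _ _ HA HBq).
    pose proof (Hgt l ltac:(lra) ltac:(lra)).
    unfold Fv in Ez, Ey. rewrite H1 in Ez. lra. }
  assert (Hth2 : th < 2 * PI / 3).
  { destruct (Rle_lt_or_eq_dec _ _ Hth1) as [|Heq]; auto. exfalso.
    destruct (phi_dec _ _ _ l H ltac:(lra)) as [t [Ht Hlt]].
    destruct (chair_energy v2 v3 l t ltac:(lra) ltac:(lra)) as [z [Hz Ez]].
    pose proof (Hmin z Hz). rewrite Heq in Ey. lra. }
  exists l, th. split; [lra|]. split; [lra|]. split; auto.
Qed.

Lemma opt_unique v2 v3 delta y y' l th l' th' : standing_assumptions v2 v3 delta ->
  optimal_cell v2 v3 y -> optimal_cell v2 v3 y' ->
  1 - delta < l <= 1 -> 2 * PI / 3 - delta < th < 2 * PI / 3 -> E_cell v2 v3 y = 6 * Fv v2 v3 l l th ->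
  1 - delta < l' <= 1 -> 2 * PI / 3 - delta < th' < 2 * PI / 3 -> E_cell v2 v3 y' = 6 * Fv v2 v3 l' l' th' ->
  l = l' /\ th = th'.
Proof.
  intros H [Ha Hm] [Ha' Hm'] Hl Ht Ey Hl' Ht' Ey'.
  pose proof (Hm y' Ha') as Hc1. pose proof (Hm' y Ha) as Hc2.
  pose proof H as H'. unpack H'. pose proof PI_gt3.
  destruct (classic ((l, l, th) = (l', l', th'))) as [E|N].
  - inversion E; auto.
  - exfalso.
    assert (Hs := Hiv l l th l' l' th' (1/2) ltac:(repeat split; apply Rabs_def1; lra)
        ltac:(repeat split; apply Rabs_def1; lra) N ltac:(lra)).
    destruct (chair_energy v2 v3 (1/2 * l + (1 - 1/2) * l') (1/2 * th + (1 - 1/2) * th') ltac:(lra) ltac:(lra))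
      as [z [Hz Ez]].
    pose proof (Hm z Hz). unfold Fv in *. cbv beta in Hs. lra.
Qed.

Theorem mainTheorem2 (v2 v3 : R -> R) (delta : R) :
  standing_assumptions v2 v3 delta ->
  exists (lstar thstar : R),
    lstar <= 1 /\ thstar < 2 * PI / 3 /\
    forall y : cell, optimal_cell v2 v3 y ->
      forall i : nat, (i < 6)%nat -> bond y i = lstar /\ bond_angle y i = thstar.
Proof.
  intros H. pose proof PI_gt3.
  destruct (classic (exists y, optimal_cell v2 v3 y)) as [[y0 Hy0]|Hno].
  - destruct (opt_struct _ _ _ _ H Hy0) as [l0 [t0 [Hl0 [Ht0 [Hb0 E0]]]]].
    exists l0, t0. split; [lra|]. split; [lra|].
    intros y Hy i Hi.
    destruct (opt_struct _ _ _ _ H Hy) as [l [t [Hl [Ht [Hb E]]]]].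
    destruct (opt_unique _ _ _ _ _ _ _ _ _ H Hy Hy0 Hl Ht E Hl0 Ht0 E0) as [-> ->].
    apply Hb; auto.
  - exists 0, 0. split; [lra|]. split; [lra|].
    intros y Hy. exfalso. eauto.
Qed.
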